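(* There is an absolute constant $C>0$ with the following property. Let $m\ge1$ and $\pi\in\mathcal P_{\le2}(m)$, and let $N^2_\pi(m)$ be the number of pairs $(\sigma,\tau)$ of commuting involutions in $\mathrm{Sym}_m$ such that $\sigma$ preserves $\pi$. Then \[ N^2_\pi(m)\le C^m(m!)^{\frac34-\frac{\pi_2}{2m}} . \]
   Context: $\mathcal P_{\le2}(m)$ is the set of set partitions of $\{1,\dots,m\}$ with all blocks of size at most $2$, and $\pi_2$ is the number of blocks of size $2$ of $\pi$. A permutation preserves $\pi$ if it maps blocks of $\pi$ to blocks of $\pi$. Involutions are elements $\sigma$ with $\sigma^2=1$ (the identity included). *)

(* Defs.v *)
From mathcomp Require Import all_boot all_fingroup.
From Stdlib Require Import Reals.
Set Implicit Arguments. Unset Strict Implicit. Unset Printing Implicit Defensive.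

(* The ground set {1,...,m} is modelled by 'I_m. *)

Definition partition_le2 (m : nat) (pi : {set {set 'I_m}}) : bool :=
  partition pi [set: 'I_m] && [forall B in pi, #|B| <= 2].

Definition nblocks2 (m : nat) (pi : {set {set 'I_m}}) : nat :=
  #|[set B in pi | #|B| == 2]|.

Definition preserves (m : nat) (pi : {set {set 'I_m}}) (s : {perm 'I_m}) : bool :=
  [forall B in pi, (s @: B) \in pi].

Definition involution (m : nat) (s : {perm 'I_m}) : bool := (s * s == 1)%g.

Definition N2 (m : nat) (pi : {set {set 'I_m}}) : nat :=
  #|[set st : {perm 'I_m} * {perm 'I_m} |
      [&& involution st.1, involution st.2,
          (st.1 * st.2 == st.2 * st.1)%g & preserves pi st.1]]|.

(* Main.v *)
Require Import Defs.
From mathcomp Require Import all_boot all_fingroup.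
From mathcomp Require Import zify.
Set Warnings "-notation-overridden".
Set Implicit Arguments. Unset Strict Implicit. Unset Printing Implicit Defensive.


Definition key m (pi : {set {set 'I_m}}) (x : 'I_m) : 'I_m :=
  [arg min_(y < x in pblock pi x) (y : nat)].

Lemma pl2_triv m (pi : {set {set 'I_m}}) : partition_le2 pi -> trivIset pi.
Proof. by case/andP=> /partition_trivIset. Qed.

Lemma pl2_cover m (pi : {set {set 'I_m}}) x : partition_le2 pi -> x \in cover pi.
Proof. by case/andP=> /and3P[/eqP -> _ _] _; rewrite inE. Qed.

Lemma mem_blk m (pi : {set {set 'I_m}}) x : partition_le2 pi -> x \in pblock pi x.
Proof. by move=> h; rewrite mem_pblock pl2_cover. Qed.

Lemma blk_mem m (pi : {set {set 'I_m}}) x : partition_le2 pi -> pblock pi x \in pi.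
Proof. by move=> h; rewrite pblock_mem // pl2_cover. Qed.

Lemma blk_eq m (pi : {set {set 'I_m}}) x y : partition_le2 pi ->
  y \in pblock pi x -> pblock pi y = pblock pi x.
Proof. by move=> h; apply: same_pblock; apply: pl2_triv. Qed.

Lemma blk_le2 m (pi : {set {set 'I_m}}) x : partition_le2 pi -> #|pblock pi x| <= 2.
Proof. by move=> h; case/andP: (h) => _ /forall_inP; apply; apply: blk_mem. Qed.

Lemma key_mem m (pi : {set {set 'I_m}}) x : partition_le2 pi -> key pi x \in pblock pi x.
Proof. by move=> h; rewrite /key; case: arg_minnP => //; apply: mem_blk. Qed.

Lemma key_min m (pi : {set {set 'I_m}}) x y : partition_le2 pi ->
  y \in pblock pi x -> key pi x <= y.
Proof. by move=> h; rewrite /key; case: arg_minnP => [|z _ hz]; [apply: mem_blk| apply: hz]. Qed.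

Lemma key_blk m (pi : {set {set 'I_m}}) x y : partition_le2 pi ->
  pblock pi x = pblock pi y -> key pi x = key pi y.
Proof.
move=> h e; apply/val_inj/eqP; rewrite eqn_leq.
rewrite key_min ?e ?key_mem //= key_min // -e key_mem //.
Qed.

Lemma key_eq m (pi : {set {set 'I_m}}) x y : partition_le2 pi ->
  key pi x = key pi y -> pblock pi x = pblock pi y.
Proof.
move=> h e; rewrite -(blk_eq h (@key_mem _ pi x h)) e (blk_eq h (@key_mem _ pi y h)) //.
Qed.

Lemma key_in m (pi : {set {set 'I_m}}) x y : partition_le2 pi ->
  y \in pblock pi x -> key pi y = key pi x.
Proof. by move=> h yx; apply: key_blk => //; apply: blk_eq. Qed.

Lemma blk_perm m (pi : {set {set 'I_m}}) (s : {perm 'I_m}) x : partition_le2 pi ->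
  preserves pi s -> pblock pi (s x) = s @: pblock pi x.
Proof.
move=> h /forall_inP ps; apply: def_pblock; first exact: pl2_triv.
  by apply: ps; apply: blk_mem.
by apply: imset_f; apply: mem_blk.
Qed.

Lemma blk_permP m (pi : {set {set 'I_m}}) (s : {perm 'I_m}) x y : partition_le2 pi ->
  preserves pi s -> y \in pblock pi x -> s y \in pblock pi (s x).
Proof. by move=> h ps yx; rewrite blk_perm //; apply: imset_f. Qed.

Lemma two_elems (T : finType) (B : {set T}) a b c : #|B| <= 2 ->
  a \in B -> b \in B -> c \in B -> a != c -> b != c -> a = b.
Proof.
move=> h aB bB cB ac bc; apply/eqP; apply/negPn/negP => ab.
have : #|c |: [set a; b]| <= #|B|.
  by apply: subset_leq_card; apply/subsetP => z; rewrite !inE => /or3P[] /eqP ->.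
rewrite cardsU1 cards2 ab !inE negb_or eq_sym ac eq_sym bc /=; lia.
Qed.

Lemma inv_ss m (s : {perm 'I_m}) x : involution s -> s (s x) = x.
Proof. by move=> /eqP e; rewrite -permM e perm1. Qed.

Lemma comm_st m (s t : {perm 'I_m}) x : (s * t == t * s)%g -> t (s x) = s (t x).
Proof. by move=> /eqP e; rewrite -permM e permM. Qed.


Definition Dset m (pi : {set {set 'I_m}}) (s : {perm 'I_m}) :=
  [set x | (key pi x == x) && (key pi x < key pi (s x))].
Definition Eset m (pi : {set {set 'I_m}}) (s : {perm 'I_m}) :=
  [set x | key pi (s x) == key pi x].
Definition Fset m (s : {perm 'I_m}) := [set x | s x == x].

Lemma sg_unique m (pi : {set {set 'I_m}}) (s s' : {perm 'I_m}) :
  partition_le2 pi -> involution s -> involution s' ->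
  preserves pi s -> preserves pi s' ->
  Eset pi s = Eset pi s' -> Fset s = Fset s' -> Dset pi s = Dset pi s' ->
  {in Dset pi s, s =1 s'} -> s = s'.
Proof.
move=> h is1 is2 ps ps' eE eF eD eq.
have H1 : forall x, key pi x < key pi (s x) -> s' x = s x.
  move=> x lt; set x0 := key pi x.
  have x0x : x0 \in pblock pi x by apply: key_mem.
  have kx0 : key pi x0 = x0 by rewrite /x0 (key_in h x0x).
  have ks : key pi (s x0) = key pi (s x) by apply: key_in => //; apply: blk_permP.
  have Dx0 : x0 \in Dset pi s by rewrite inE kx0 eqxx /= ks.
  have e0 : s' x0 = s x0 by rewrite eq.
  have bx0 : pblock pi x0 = pblock pi x by apply: blk_eq.
  case: (eqVneq x x0) => [->|nx]; first exact: e0.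
  apply: (@two_elems _ (pblock pi (s x0)) _ _ (s x0)); first exact: blk_le2.
  - by rewrite -e0; apply: blk_permP => //; rewrite bx0 mem_blk.
  - by apply: blk_permP => //; rewrite bx0 mem_blk.
  - exact: mem_blk.
  - by rewrite -e0 (inj_eq perm_inj).
  - by rewrite (inj_eq perm_inj).
apply/permP => x.
case: (ltngtP (key pi x) (key pi (s x))) => hk.
- by rewrite H1.
- have e := H1 (s x); rewrite inv_ss // in e; have {}e := e hk.
  by rewrite -{2}e inv_ss.
- have Ex : x \in Eset pi s' by rewrite -eE inE; apply/eqP/val_inj.
  case: (eqVneq (s x) x) => [sx|nsx].
    have : x \in Fset s' by rewrite -eF inE sx.
    by rewrite inE sx => /eqP ->.
  have : x \notin Fset s' by rewrite -eF inE.
  rewrite inE => nsx'.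
  rewrite inE in Ex.
  apply: (@two_elems _ (pblock pi x) _ _ x); first exact: blk_le2.
  - rewrite -(key_eq h (_ : key pi (s x) = key pi x)); first exact: mem_blk.
    by apply/val_inj.
  - by rewrite -(key_eq h (eqP Ex)) mem_blk.
  - exact: mem_blk.
  - exact: nsx.
  - exact: nsx'.
Qed.


Definition omin m (s : {perm 'I_m}) (x : 'I_m) : 'I_m := if x <= s x then x else s x.
Definition Tset m (s t : {perm 'I_m}) := [set x : 'I_m | (x <= s x) && (x < omin s (t x))].
Definition Gset m (t : {perm 'I_m}) := [set x | t x == x].
Definition Hset m (s t : {perm 'I_m}) := [set x | t x == s x].

Lemma omin_in m (s : {perm 'I_m}) y : omin s y = y \/ omin s y = s y.
Proof. by rewrite /omin; case: ifP; [left|right]. Qed.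

Lemma in4 (T : finType) (y a b c d : T) : y \in [set a; b; c; d] ->
  [\/ y = a, y = b, y = c | y = d].
Proof.
by rewrite !inE -!orbA => /or4P[] /eqP->;
  [apply: Or41|apply: Or42|apply: Or43|apply: Or44].
Qed.

Lemma tu_unique m (s t t' : {perm 'I_m}) :
  involution s -> involution t -> involution t' ->
  (s * t == t * s)%g -> (s * t' == t' * s)%g ->
  Gset t = Gset t' -> Hset s t = Hset s t' -> Tset s t = Tset s t' ->
  {in Tset s t, t =1 t'} -> t = t'.
Proof.
move=> is1 it it' c c' eG eH eT eq.
have ss : forall y, s (s y) = y by move=> y; apply: inv_ss.
have tt : forall y, t (t y) = y by move=> y; apply: inv_ss.
have tt' : forall y, t' (t' y) = y by move=> y; apply: inv_ss.
have st : forall y, t (s y) = s (t y) by move=> y; apply: comm_st.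
have st' : forall y, t' (s y) = s (t' y) by move=> y; apply: comm_st.
have clS : forall x, t' x = t x -> t' (s x) = t (s x).
  by move=> x e; rewrite st st' e.
have clT : forall x, t' x = t x -> t' (t x) = t (t x).
  by move=> x e; rewrite -{1}e tt tt'.
apply/permP => x; apply/esym.
pose Q := [set x; s x; t x; s (t x)].
have Qs : forall y, y \in Q -> s y \in Q.
  move=> y yQ; case/in4: yQ => ->; rewrite /Q !inE ?ss ?eqxx ?orbT //.
have Qt : forall y, y \in Q -> t y \in Q.
  move=> y yQ; case/in4: yQ => ->; rewrite /Q !inE ?st ?tt ?ss ?eqxx ?orbT //.
have xQ : x \in Q by rewrite !inE eqxx.
case: (@arg_minnP _ x (mem Q) (fun y : 'I_m => val y) xQ) => z zQ zmin.
have Pz : t' z = t z.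
  case: (eqVneq (t z) z) => [tz|ntz].
    have : z \in Gset t' by rewrite -eG inE tz.
    by rewrite inE tz => /eqP.
  case: (eqVneq (t z) (s z)) => [tsz|ntsz].
    have : z \in Hset s t' by rewrite -eH inE tsz.
    by rewrite inE tsz => /eqP.
  have zT : z \in Tset s t.
    have Q0 := Qs _ zQ; have Q1 := Qt _ zQ; have Q2 := Qs _ Q1.
    rewrite inE zmin //=.
    have ne1 : (z : nat) != t z by rewrite eq_sym (inj_eq val_inj).
    have ne2 : (z : nat) != s (t z).
      rewrite (inj_eq val_inj); apply/eqP => e; move/eqP: ntsz; apply.
      by rewrite {2}e ss.
    by case: (omin_in s (t z)) => ->; rewrite ltn_neqAle ?ne1 ?ne2 zmin.
  by rewrite (eq z zT).
case/in4: zQ => ez.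
- by rewrite -ez.
- by have := clS _ Pz; rewrite ez ss.
- by have := clT _ Pz; rewrite ez tt.
- have e1 : s z = t x by rewrite ez ss.
  by have := clT _ (clS _ Pz); rewrite e1 tt.
Qed.


Definition Jset m (s : {perm 'I_m}) := [set x : 'I_m | x < s x].

Lemma card_disj (T : finType) (A B C : {set T}) :
  A \subset C -> B \subset C -> A :&: B = set0 -> #|A| + #|B| <= #|C|.
Proof.
move=> AC BC AB; have := subset_leq_card (_ : A :|: B \subset C).
rewrite cardsU AB cards0 subn0; apply; by rewrite subUset AC BC.
Qed.

Lemma ord_anti m (x y : 'I_m) : x <= y -> y <= x -> x = y.
Proof. by move=> h1 h2; apply/val_inj/eqP; rewrite eqn_leq h1 h2. Qed.

Section Omin.
End Omin.

Lemma omin_le m (s : {perm 'I_m}) (y : 'I_m) : involution s -> omin s y <= s (omin s y).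
Proof.
move=> is1; rewrite /omin; case: ifP => // /negbT; rewrite inv_ss // -ltnNge.
by move/ltnW.
Qed.

Lemma omin_id m (s : {perm 'I_m}) (y : 'I_m) : y <= s y -> omin s y = y.
Proof. by rewrite /omin => ->. Qed.

Lemma omin_s m (s : {perm 'I_m}) (y : 'I_m) : involution s -> omin s (s y) = omin s y.
Proof.
move=> is1; rewrite /omin inv_ss //.
by case: ifP; case: ifP => // h1 h2; apply: ord_inj; move: h1 h2; lia.
Qed.

Lemma omin_eq m (s : {perm 'I_m}) (a b : 'I_m) : involution s ->
  omin s a = omin s b -> a = b \/ a = s b.
Proof.
move=> is1; case: (omin_in s a) => ->; case: (omin_in s b) => -> e; auto.
- by right; rewrite -e inv_ss.
- by left; apply: perm_inj e.
Qed.

Lemma countT m (s t : {perm 'I_m}) : involution s -> involution t ->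
  (s * t == t * s)%g -> 2 * #|Tset s t| + #|Jset s| <= m.
Proof.
move=> is1 it c.
have ss : forall y, s (s y) = y by move=> y; apply: inv_ss.
have tt : forall y, t (t y) = y by move=> y; apply: inv_ss.
have st : forall y, t (s y) = s (t y) by move=> y; apply: comm_st.
pose O := [set x : 'I_m | x <= s x].
have cO : #|O| + #|Jset s| = m.
  have -> : #|Jset s| = #|~: O|.
    have -> : ~: O = s @: Jset s.
      apply/setP => x; rewrite !inE -ltnNge; apply/idP/imsetP.
        by move=> h; exists (s x); rewrite ?inE ss.
      by case=> y; rewrite inE => h ->; rewrite ss.
    by rewrite card_imset //; apply: perm_inj.
  by rewrite cardsC card_ord.
pose U := [set omin s (t x) | x in Tset s t].
have cU : #|U| = #|Tset s t|.
  apply: card_in_imset => y1 y2; rewrite !inE => /andP[h1 _] /andP[h2 _] e.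
  case: (omin_eq is1 e) => e'; first by apply: perm_inj e'.
  have e2 : y1 = s y2 by apply: (@perm_inj _ t); rewrite e' st.
  apply: ord_anti; first by rewrite {2}e2 ss in h1.
  by rewrite -e2 in h2.
suff : #|Tset s t| + #|U| <= #|O| by lia.
apply: card_disj.
- by apply/subsetP => x; rewrite !inE => /andP[].
- by apply/subsetP => x /imsetP[y _ ->]; rewrite inE omin_le.
- apply/setP => w; rewrite !inE; apply/negbTE/negP => /andP[/andP[_ hw] /imsetP[y]].
  rewrite inE => /andP[hy1 hy2] ew.
  have : omin s (t w) = y.
    rewrite ew; case: (omin_in s (t y)) => ->; rewrite ?st tt ?omin_s //;
    by rewrite omin_id.
  move=> e; rewrite e ew in hw; move: hy2 hw; lia.
Qed.


Definition Sing m (pi : {set {set 'I_m}}) := [set x : 'I_m | #|pblock pi x| == 1].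
Definition partner m (pi : {set {set 'I_m}}) (x : 'I_m) : 'I_m :=
  odflt x [pick y in pblock pi x :\ x].

Lemma partner_spec m (pi : {set {set 'I_m}}) (x : 'I_m) : partition_le2 pi ->
  x \notin Sing pi -> partner pi x \in pblock pi x /\ partner pi x != x.
Proof.
move=> h; rewrite inE /partner => n1; case: pickP => [y|none].
  by rewrite !inE => /andP[-> ->].
have := cardsD1 x (pblock pi x); rewrite mem_blk //.
have -> : #|pblock pi x :\ x| = 0 by apply/eqP; rewrite cards_eq0; apply/eqP/setP => z; rewrite none inE.
by move=> e; rewrite e in n1.
Qed.

Lemma D_J m (pi : {set {set 'I_m}}) (s : {perm 'I_m}) : partition_le2 pi ->
  Dset pi s \subset Jset s.
Proof.
move=> h; apply/subsetP => x; rewrite !inE => /andP[/eqP e lt].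
rewrite -{1}e; apply: (leq_trans lt); apply: key_min => //; exact: mem_blk.
Qed.

Lemma countD m (pi : {set {set 'I_m}}) (s : {perm 'I_m}) : partition_le2 pi ->
  involution s -> preserves pi s ->
  #|Dset pi s| + #|Dset pi s :\: Sing pi| <= #|Jset s|.
Proof.
move=> h is1 ps.
have ss : forall y, s (s y) = y by move=> y; apply: inv_ss.
have facts : forall x, x \in Dset pi s :\: Sing pi ->
   [/\ key pi (partner pi x) = x, key pi (s (partner pi x)) = key pi (s x),
       x < key pi (s x) & partner pi x != x].
  move=> x; rewrite inE => /andP[nS]; rewrite inE => /andP[/eqP kx lt].
  have [pB px] := partner_spec h nS.
  split; [by rewrite (key_in h pB) | by apply: key_in => //; apply: blk_permP
          | by rewrite -{1}kx | exact: px].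
pose f x := omin s (partner pi x).
rewrite addnC -(card_in_imset (f := f)).
  apply: card_disj; last first.
  - apply/setP => w; rewrite !inE; apply/negbTE/negP => /andP[/imsetP[x xD ->]].
    have [k1 k2 k3 k4] := facts x xD.
    rewrite /f; case: (omin_in s (partner pi x)) => -> /andP[/eqP kp lt].
      by rewrite -kp k1 eqxx in k4.
    by move: lt; rewrite ss k1 k2; move: k3; lia.
  - exact: D_J.
  - apply/subsetP => w /imsetP[x xD ->].
    have [k1 k2 k3 k4] := facts x xD.
    set p := partner pi x.
    have nsp : s p != p.
      by apply/eqP => e; move: k3; rewrite -k2 e k1; lia.
    have nsp' : (s p : nat) != p by rewrite (inj_eq (@ord_inj m)).
    rewrite inE /f /omin -/p; case: ifP => h1; rewrite ?ss; move: h1 nsp'; lia.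
move=> x1 x2 D1 D2; rewrite /f => e.
have [k1 k2 k3 k4] := facts x1 D1.
have [l1 l2 l3 l4] := facts x2 D2.
case: (omin_eq is1 e) => e'.
  by rewrite -k1 -l1 e'.
have : key pi (s (partner pi x1)) = x2 by rewrite e' ss l1.
move: k3 l3; rewrite -k2 => + + e2; rewrite e2 -l2 -e' k1; lia.
Qed.


Lemma countS m (pi : {set {set 'I_m}}) (s : {perm 'I_m}) : partition_le2 pi ->
  involution s -> preserves pi s ->
  2 * #|Dset pi s :&: Sing pi| + 2 * nblocks2 pi <= m.
Proof.
move=> h is1 ps.
have ss : forall y, s (s y) = y by move=> y; apply: inv_ss.
have DJ := D_J s h.
have sS : forall x, x \in Sing pi -> s x \in Sing pi.
  by move=> x; rewrite !inE blk_perm // card_imset //; apply: perm_inj.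
have c1 : #|Dset pi s :&: Sing pi| + #|s @: (Dset pi s :&: Sing pi)| <= #|Sing pi|.
  apply: card_disj.
  - by apply/subsetP => x; rewrite inE => /andP[].
  - by apply/subsetP => w /imsetP[x]; rewrite inE => /andP[_ /sS] ? ->.
  apply/setP => w; rewrite inE [w \in set0]inE; apply/negbTE/negP.
  move=> /andP[/setIP[wD _] /imsetP[y /setIP[yD _] e]].
  have := subsetP DJ _ wD; have := subsetP DJ _ yD; rewrite !inE e ss; lia.
rewrite card_imset in c1; last by apply: perm_inj.
have {}c1 : #|Dset pi s :&: Sing pi| + #|Dset pi s :&: Sing pi| <= #|Sing pi| by exact: c1.
pose P2 := [set B in pi | #|B| == 2].
have cP : #|cover P2| = 2 * nblocks2 pi.
  have -> : #|cover P2| = \sum_(B in P2) #|B|.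
    apply/eqP; rewrite (leq_card_cover P2).2; apply: (trivIsetS _ (pl2_triv h)).
    by apply/subsetP => B; rewrite inE => /andP[].
  rewrite (eq_bigr (fun _ => 2)); last by move=> B; rewrite inE => /andP[_ /eqP].
  by rewrite sum_nat_const mulnC.
have c2 : #|Sing pi| + #|cover P2| <= #|[set: 'I_m]|.
  apply: card_disj; try by apply/subsetP.
  apply/setP => x; rewrite !inE; apply/negbTE/negP => /andP[/eqP c /bigcupP[B]].
  rewrite inE => /andP[Bpi /eqP cB] xB.
  by move: c; rewrite (def_pblock (pl2_triv h) Bpi xB) cB.
move: c1 c2; rewrite cP cardsT card_ord; lia.
Qed.


Definition code m (pi : {set {set 'I_m}}) (x0 : 'I_m) (R : nat)
    (st : {perm 'I_m} * {perm 'I_m}) :=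
  (Eset pi st.1, Fset st.1, Dset pi st.1, Gset st.2, Hset st.1 st.2, Tset st.1 st.2,
   [tuple nth x0 (map st.1 (enum (Dset pi st.1)) ++ map st.2 (enum (Tset st.1 st.2))) i
     | i < R]).

Lemma ptr_bound m (pi : {set {set 'I_m}}) (s t : {perm 'I_m}) : partition_le2 pi ->
  involution s -> involution t -> (s * t == t * s)%g -> preserves pi s ->
  #|Dset pi s| + #|Tset s t| <= (3 * m - 2 * nblocks2 pi) %/ 4.
Proof.
move=> h is1 it c ps.
have h1 := countT is1 it c.
have h2 := countD h is1 ps.
have h3 := countS h is1 ps.
have h4 := cardsID (Sing pi) (Dset pi s).
move: h1 h2 h3 h4; lia.
Qed.

Lemma N2_bound m (pi : {set {set 'I_m}}) (x0 : 'I_m) : partition_le2 pi ->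
  N2 pi <= (2 ^ m) ^ 6 * m ^ ((3 * m - 2 * nblocks2 pi) %/ 4).
Proof.
move=> h; set R := (3 * m - 2 * nblocks2 pi) %/ 4.
rewrite /N2 -(card_in_imset (f := code pi x0 R)).
  apply: leq_trans (max_card _) _.
  have cs : forall T : finType, #|{set T}| = 2 ^ #|T|.
    by move=> T; have := card_powerset [set: T]; rewrite powersetT !cardsT.
  rewrite !card_prod !cs card_tuple !card_ord.
  by rewrite expnS !expnSr expn0 mul1n !mulnA.
move=> [s t] [s' t']; rewrite !inE /= => /and4P[is1 it c ps] /and4P[is2 it' c' ps'] e.
have etup := congr1 snd e; rewrite /code /= in etup.
case: e => eE eF eD eG eH eT _.
set l := map s (enum (Dset pi s)) ++ map t (enum (Tset s t)).
set l' := map s' (enum (Dset pi s')) ++ map t' (enum (Tset s' t')).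
have sl : size l = #|Dset pi s| + #|Tset s t| by rewrite size_cat !size_map -!cardE.
have sl' : size l' = size l by rewrite sl size_cat !size_map -!cardE eD eT.
have ll : l = l'.
  apply: (@eq_from_nth _ x0); first by rewrite sl'.
  move=> i hi; have hR : i < R by apply: leq_trans hi _; rewrite sl; apply: ptr_bound.
  by have := congr1 (fun u => tnth u (Ordinal hR)) etup; rewrite !tnth_mktuple.
move/eqP: ll; rewrite /l /l' -eD -eT eqseq_cat ?size_map // => /andP[/eqP e1 /eqP e2].
move/eq_in_map: e1 => e1; move/eq_in_map: e2 => e2.
have ess : s = s'.
  apply: (sg_unique h) => // x xD; apply: e1; by rewrite mem_enum.
subst s'; congr (_, _).
apply: tu_unique eG eH eT _ => // x xT; apply: e2; by rewrite mem_enum.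
Qed.


Lemma nblocks2_le m (pi : {set {set 'I_m}}) : partition_le2 pi -> 2 * nblocks2 pi <= m.
Proof.
move=> h.
have i1 : involution (1%g : {perm 'I_m}) by rewrite /involution mulg1.
have p1 : preserves pi (1%g : {perm 'I_m}).
  apply/forall_inP => B BP.
  have -> : [set (1%g : {perm 'I_m}) x | x in B] = B.
    by rewrite -[RHS]imset_id; apply: eq_imset => x; rewrite perm1.
  done.
have := countS h i1 p1; lia.
Qed.


From Stdlib Require Import Reals Lra.
Open Scope R_scope.

Lemma exp_pow_n (n : nat) x : exp x ^ n = exp (INR n * x).
Proof. rewrite -(Rpower_pow n (exp x)); last exact: exp_pos. by rewrite /Rpower ln_exp. Qed.

Lemma step_bound (n : nat) : INR (S n) ^ n <= 3 * INR n ^ n.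
Proof.
destruct n as [|n]; first by simpl; lra.
set a := INR (S n).
have ha : 0 < a by apply: lt_0_INR; lia.
have -> : INR (S (S n)) = a * (1 + / a).
  rewrite S_INR -/a; field; lra.
rewrite Rpow_mult_distr.
have h1 : (1 + / a) ^ (S n) <= exp (/ a) ^ (S n).
  apply: pow_incr; split; last exact: exp_ineq1_le.
  have := Rinv_0_lt_compat _ ha; lra.
have h2 : exp (/ a) ^ (S n) = exp 1.
  rewrite exp_pow_n -/a; congr exp; field; lra.
have h3 := exp_le_3.
have h4 : 0 <= a ^ S n by apply: pow_le; lra.
nra.
Qed.

Lemma pow_fact_bound (n : nat) : INR n ^ n <= 3 ^ n * INR (n`!).
Proof.
elim: n => [|n IH]; first by simpl; lra.
rewrite factS mult_INR.
rewrite -!tech_pow_Rmult.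
have h0 : 0 <= INR n.+1 by apply: pos_INR.
have h1 := step_bound n.
have h3 : INR n.+1 ^ n <= 3 * (3 ^ n * INR n`!) by lra.
have := Rmult_le_compat_l _ _ _ h0 h3.
lra.
Qed.

Close Scope R_scope.


Lemma INR_expn (a n : nat) : INR (expn a n) = (INR a ^ n)%R.
Proof. elim: n => [|n IH] //=; by rewrite expnS -multE mult_INR IH. Qed.

Lemma main_real (m k R N : nat) : (1 <= m)%nat -> (2 * k <= m)%nat -> (4 * R + 2 * k <= 3 * m)%nat ->
  (N <= expn 64 m * expn m R)%nat ->
  (INR N <= 192 ^ m * Rpower (INR (m`!)) (3 / 4 - INR k / (2 * INR m)))%R.
Proof.
move=> hm hk hR hN.
set e := (3 / 4 - INR k / (2 * INR m))%R.
set M := INR m.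
have hM : (1 <= M)%R by rewrite /M; apply: (le_INR 1); apply/leP.
have hkr : (2 * INR k <= M)%R.
  rewrite /M; have := le_INR _ _ (elimT leP hk); rewrite -multE mult_INR /=; lra.
have hRr : (4 * INR R + 2 * INR k <= 3 * M)%R.
  rewrite /M; have := le_INR _ _ (elimT leP hR); rewrite -plusE -!multE !plus_INR ?mult_INR /=; lra.
have hMe : (M * e = 3 / 4 * M - INR k / 2)%R.
  rewrite /e /M; field; apply: not_0_INR; lia.
have hk0 : (0 <= INR k)%R by apply: pos_INR.
have he0 : (0 <= e)%R by nra.
have he1 : (e <= 1)%R by nra.
have hRe : (INR R <= M * e)%R by lra.
have hf := pow_fact_bound m.
have hfpos : (0 < INR (m`!))%R by apply: lt_0_INR; apply/ltP; apply: fact_gt0.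
have h3pos : (0 < 3 ^ m)%R by apply: pow_lt; lra.
have h3ge : (1 <= 3 ^ m)%R by apply: pow_R1_Rle; lra.
have key : (M ^ R <= 3 ^ m * Rpower (INR (m`!)) e)%R.
  rewrite -Rpower_pow; last lra.
  apply: Rle_trans (Rle_Rpower _ _ _ hM hRe) _.
  rewrite -Rpower_mult Rpower_pow; last lra.
  apply: Rle_trans (Rle_Rpower_l _ _ _ he0 _) _.
    split; first by apply: pow_lt; lra.
    exact: hf.
  rewrite -Rpower_mult_distr //.
  apply: Rmult_le_compat_r; first by rewrite /Rpower; apply: Rlt_le; apply: exp_pos.
  apply: Rle_trans (Rle_Rpower _ _ _ h3ge he1) _.
  by rewrite Rpower_1 //; apply: Rle_refl.
have := le_INR _ _ (elimT leP hN); rewrite -multE mult_INR !INR_expn -/M.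
have -> : INR 64 = 64%R by simpl; lra.
have -> : (192 ^ m = 64 ^ m * 3 ^ m)%R by rewrite -Rpow_mult_distr; congr pow; lra.
have h64 : (0 <= 64 ^ m)%R by apply: pow_le; lra.
move=> hN'; apply: Rle_trans hN' _.
rewrite Rmult_assoc; apply: Rmult_le_compat_l => //.
Qed.


Delimit Scope nat_scope with N.

Theorem lemma5p3 :
  exists C : R, (0 < C)%R /\
    forall (m : nat) (pi : {set {set 'I_m}}),
      (1 <= m)%N -> partition_le2 pi ->
      (INR (N2 pi) <=
         C ^ m * Rpower (INR (m`!))
                   (3 / 4 - INR (nblocks2 pi) / (2 * INR m)))%R.
Proof.
exists 192%R; split; first lra.
move=> m pi hm h.
have hk := nblocks2_le h.
apply: (@main_real m (nblocks2 pi) ((3 * m - 2 * nblocks2 pi) %/ 4) (N2 pi)) => //.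
- lia.
- have e : expn (expn 2 m) 6 = expn 64 m by rewrite -expnM mulnC expnM.
  have := N2_bound (Ordinal hm) h; rewrite e; exact.
Qed.
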